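(* Let $d\ge2$ be an integer, let $\nu_d$ be the probability measure on $[-1,1]$ given by $d\nu_d(x)=Z_d^{-1}(1-x^2)^{\frac d2-1}dx$ with $Z_d=\sqrt\pi\,\Gamma(\tfrac d2)/\Gamma(\tfrac{d+1}2)$, set $\nu(x):=1-x^2$, and let $\mathcal L f:=(1-x^2)f''-d\,x\,f'$. For functions $f_1,f_2$ write $\langle f_1,f_2\rangle:=\int_{-1}^1 f_1f_2\,d\nu_d$. Let $2^\sharp:=\frac{2d^2+1}{(d-1)^2}$ and $p\in(2,2^\sharp]$. Then for every positive function $f\in C^2([-1,1])$, \[ \langle\mathcal Lf,\mathcal Lf\rangle+(p-1)\left\langle\frac{|f'|^2}{f}\,\nu,\ \mathcal Lf\right\rangle+d\,\langle f,\mathcal Lf\rangle\ \ge\ 0 . \] *)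

(* Defs.v *)
From Stdlib Require Import Reals.
From Coquelicot Require Import Coquelicot.
Open Scope R_scope.

Definition Gamma (s : R) : R :=
  RInt_gen (fun t => Rpower t (s - 1) * exp (- t)) (at_right 0) (Rbar_locally p_infty).

Definition Zd (d : nat) : R :=
  sqrt PI * Gamma (INR d / 2) / Gamma ((INR d + 1) / 2).

(* Density weight (1 - x^2)^(d/2 - 1) = (sqrt (1 - x^2))^(d-2) for d >= 2. *)
Definition weight (d : nat) (x : R) : R := (sqrt (1 - x ^ 2)) ^ (d - 2).

Definition inner (d : nat) (g1 g2 : R -> R) : R :=
  RInt (fun x => / Zd d * weight d x * (g1 x * g2 x)) (-1) 1.

Definition nu (x : R) : R := 1 - x ^ 2.

(* L f = (1 - x^2) f'' - d x f', given f' = f1 and f'' = f2. *)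
Definition Lop (d : nat) (f1 f2 : R -> R) (x : R) : R :=
  (1 - x ^ 2) * f2 x - INR d * x * f1 x.

Definition in_I (x : R) : Prop := -1 <= x <= 1.

Definition is_derive_I (g : R -> R) (x l : R) : Prop :=
  filterlim (fun y => (g y - g x) / (y - x))
    (within (fun y => in_I y /\ y <> x) (locally x)) (locally l).

Definition continuous_I (g : R -> R) (x : R) : Prop :=
  filterlim g (within in_I (locally x)) (locally (g x)).

Definition C2_on_I (f f1 f2 : R -> R) : Prop :=
  (forall x, in_I x -> is_derive_I f x (f1 x)) /\
  (forall x, in_I x -> is_derive_I f1 x (f2 x)) /\
  (forall x, in_I x -> continuous_I f2 x).

Definition two_sharp (d : nat) : R :=
  (2 * INR d ^ 2 + 1) / (INR d - 1) ^ 2.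

(* Main.v *)
Require Import Defs.
From Stdlib Require Import Reals Lra Lia Classical.
From Coquelicot Require Import Coquelicot.
Open Scope R_scope.

Lemma ballR (x e y : R) : ball x e y <-> Rabs (y - x) < e.
Proof. reflexivity. Qed.

Lemma derI_ed g x l : is_derive_I g x l -> forall eps, 0 < eps -> exists del, 0 < del /\
  forall y, in_I y -> y <> x -> Rabs (y - x) < del -> Rabs ((g y - g x)/(y - x) - l) < eps.
Proof.
  intros H eps He. unfold is_derive_I in H.
  specialize (H _ (locally_ball l (mkposreal eps He))).
  destruct H as [[del Hd] H]. exists del. split; [exact Hd|].
  intros y Hy Hyx Hyd. apply (H y). apply ballR. exact Hyd. split; assumption.
Qed.

Lemma contI_ed g x : continuous_I g x -> forall eps, 0 < eps -> exists del, 0 < del /\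
  forall y, in_I y -> Rabs (y - x) < del -> Rabs (g y - g x) < eps.
Proof.
  intros H eps He. unfold continuous_I in H.
  specialize (H _ (locally_ball (g x) (mkposreal eps He))).
  destruct H as [[del Hd] H]. exists del. split; [exact Hd|].
  intros y Hy Hyd. apply (H y). apply ballR. exact Hyd. exact Hy.
Qed.

Lemma contI_of_ed g x : (forall eps, 0 < eps -> exists del, 0 < del /\
  forall y, in_I y -> Rabs (y - x) < del -> Rabs (g y - g x) < eps) -> continuous_I g x.
Proof.
  intros H P [eps HP]. destruct (H eps (cond_pos eps)) as [del [Hd H']].
  exists (mkposreal del Hd). intros y Hy HI. apply HP. apply ballR. apply H'; auto.
Qed.

Lemma derI_cont g x l : is_derive_I g x l -> continuous_I g x.
Proof.
  intros H. apply contI_of_ed. intros eps He.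
  destruct (derI_ed g x l H 1 Rlt_0_1) as [del [Hd H']].
  assert (Hl : 0 < Rabs l + 1) by (pose proof (Rabs_pos l); lra).
  exists (Rmin del (eps / (Rabs l + 1))). split.
  { apply Rmin_pos; auto. apply Rdiv_lt_0_compat; lra. }
  intros y Hy Hyd.
  destruct (Req_dec y x) as [->|Hyx]. { rewrite Rminus_diag, Rabs_R0; lra. }
  assert (Hyd1 : Rabs (y - x) < del) by (eapply Rlt_le_trans; [exact Hyd| apply Rmin_l]).
  assert (Hyd2 : Rabs (y - x) < eps / (Rabs l + 1)) by (eapply Rlt_le_trans; [exact Hyd| apply Rmin_r]).
  specialize (H' y Hy Hyx Hyd1).
  assert (Hne : y - x <> 0) by lra.
  replace (g y - g x) with ((g y - g x) / (y - x) * (y - x)) by (field; auto).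
  rewrite Rabs_mult.
  assert (Hq : Rabs ((g y - g x) / (y - x)) <= Rabs l + 1).
  { pose proof (Rabs_triang_inv ((g y - g x) / (y - x)) l). lra. }
  assert (Hp : 0 < Rabs (y - x)) by (apply Rabs_pos_lt; auto).
  apply Rle_lt_trans with ((Rabs l + 1) * Rabs (y - x)).
  { apply Rmult_le_compat_r; lra. }
  apply Rmult_lt_reg_l with (/ (Rabs l + 1)). { apply Rinv_0_lt_compat; lra. }
  rewrite <- Rmult_assoc, Rinv_l by lra. unfold Rdiv in Hyd2. lra.
Qed.

Lemma derI_int g x l : -1 < x < 1 -> is_derive_I g x l -> is_derive g x l.
Proof.
  intros Hx H. apply is_derive_Reals. intros eps He.
  destruct (derI_ed g x l H eps He) as [del [Hd H']].
  assert (Hp : 0 < Rmin del (Rmin (x + 1) (1 - x))).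
  { repeat apply Rmin_pos; lra. }
  exists (mkposreal _ Hp). intros h Hh Hhd. simpl in Hhd.
  pose proof (Rmin_l del (Rmin (x + 1) (1 - x))).
  pose proof (Rmin_r del (Rmin (x + 1) (1 - x))).
  pose proof (Rmin_l (x + 1) (1 - x)). pose proof (Rmin_r (x + 1) (1 - x)).
  replace h with (x + h - x) at 2 by ring.
  apply H'.
  - unfold in_I. apply Rabs_def2 in Hhd. lra.
  - lra.
  - replace (x + h - x) with h by ring. lra.
Qed.

Definition clamp (x : R) : R := Rmax (-1) (Rmin 1 x).

Lemma clamp_I x : in_I (clamp x).
Proof. unfold clamp, in_I, Rmax, Rmin. repeat destruct Rle_dec; lra. Qed.

Lemma clamp_id x : in_I x -> clamp x = x.
Proof. unfold clamp, in_I, Rmax, Rmin. intros. repeat destruct Rle_dec; lra. Qed.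

Lemma clamp_lip x y : Rabs (clamp y - clamp x) <= Rabs (y - x).
Proof. unfold clamp, Rmax, Rmin. repeat destruct Rle_dec; unfold Rabs; repeat destruct Rcase_abs; lra. Qed.

Lemma cont_clamp g : (forall x, in_I x -> continuous_I g x) ->
  forall x, continuity_pt (fun y => g (clamp y)) x.
Proof.
  intros H x eps He. destruct (contI_ed g (clamp x) (H _ (clamp_I x)) eps He) as [del [Hd H']].
  exists del. split; auto. intros y [_ Hy]. simpl in *. unfold R_dist in *.
  apply H'. apply clamp_I. eapply Rle_lt_trans. apply clamp_lip. exact Hy.
Qed.
Lemma Gamma_ge0 s : 0 <= Gamma s.
Proof.
  set (g := fun t => Rpower t (s - 1) * exp (- t)).
  destruct (classic (exists l, is_RInt_gen g (at_right 0) (Rbar_locally p_infty) l)) as [[l Hl]|Hn].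
  - unfold Gamma. fold g. rewrite (is_RInt_gen_unique g l Hl).
    destruct (Rle_or_lt 0 l) as [Hl0|Hl0]; [exact Hl0|exfalso].
    assert (He : 0 < - l / 2) by lra.
    specialize (Hl _ (locally_ball l (mkposreal _ He))).
    destruct Hl as [Q R HQ HR HP].
    destruct HQ as [[del Hd] HQ]. destruct HR as [M HM].
    assert (Ha : Q (del / 2)).
    { apply HQ. apply ballR. simpl. rewrite Rminus_0_r, Rabs_pos_eq; lra. lra. }
    assert (Hb : R (Rmax M del + 1)).
    { apply HM. pose proof (Rmax_l M del). lra. }
    destruct (HP _ _ Ha Hb) as [y [Hy Hyb]].
    apply ballR in Hyb. simpl in Hyb.
    assert (0 <= y).
    { apply (is_RInt_ge_0 g (del/2) (Rmax M del + 1) y).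
      pose proof (Rmax_r M del). lra. exact Hy.
      intros x _. unfold g, Rpower. left; apply Rmult_lt_0_compat; apply exp_pos. }
    apply Rabs_def2 in Hyb. unfold minus, plus, opp in Hyb; simpl in Hyb. lra.
  - unfold Gamma, RInt_gen, iota. fold g.
    change (lim (fun A => forall x, is_RInt_gen g (at_right 0) (Rbar_locally p_infty) x -> A x))
      with (R_complete_lim (fun A => forall x, is_RInt_gen g (at_right 0) (Rbar_locally p_infty) x -> A x)).
    unfold R_complete_lim.
    rewrite (is_lub_Rbar_unique _ p_infty). simpl; lra.
    split.
    + intros x _. simpl. exact I.
    + intros b Hb. destruct b as [b| |]; simpl; auto.
      * specialize (Hb (b + 1)). simpl in Hb.
        assert (b + 1 <= b). { apply Hb. intros x Hx. exfalso. apply Hn. exists x; exact Hx. }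
        lra.
      * specialize (Hb 0). apply Hb. intros x Hx. exfalso. apply Hn. exists x; exact Hx.
Qed.

Lemma invZd_ge0 d : 0 <= / Zd d.
Proof.
  assert (0 <= Zd d).
  { unfold Zd. pose proof (sqrt_pos PI). pose proof (Gamma_ge0 (INR d / 2)).
    pose proof (Gamma_ge0 ((INR d + 1) / 2)) as H2.
    apply Rmult_le_pos. apply Rmult_le_pos; auto.
    destruct H2 as [H2|H2]. left; apply Rinv_0_lt_compat; auto. rewrite <- H2, Rinv_0; lra. }
  destruct H as [H|H]. left; apply Rinv_0_lt_compat; auto. rewrite <- H, Rinv_0; lra.
Qed.
Lemma dS m x : -1 < x < 1 ->
  is_derive (fun y => sqrt (1 - y^2) ^ m) x (- INR m * x * sqrt (1 - x^2) ^ m / (1 - x^2)).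
Proof.
  intros Hx. auto_derive.
  - nra.
  - replace (1 + - (x*(x*1))) with (1 - x^2) by ring.
    assert (Hs : 0 < sqrt (1 - x^2)) by (apply sqrt_lt_R0; nra).
    assert (Hs2 : sqrt (1 - x^2) * sqrt (1 - x^2) = 1 - x^2) by (apply sqrt_sqrt; nra).
    assert (Hn : 1 - x^2 <> 0) by nra.
    destruct m as [|k].
    + simpl. unfold Rdiv. ring.
    + simpl pred. set (s := sqrt (1 - x^2)) in *. rewrite <- Hs2. simpl pow. field. lra.
Qed.
Definition Qval D p F F1 F2 :=
  F2^2 - 2*(p-1)*(D-1)/(D+2)*F2*(F1^2/F) + (p-1)*D/(D+2)*(F1^2/F)^2.
Lemma Q_ge0 D p F F1 F2 : 0 < F -> 2 <= D -> 2 < p -> p <= (2 * D^2 + 1) / (D - 1)^2 -> 0 <= Qval D p F F1 F2.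
Proof.
  intros HF HD Hp1 Hp2.
  set (k := (p-1)*(D-1)/(D+2)). set (m := (p-1)*D/(D+2)).
  set (b := F1^2/F).
  assert (HQ : Qval D p F F1 F2 = (F2 - k*b)^2 + (m - k^2)*b^2).
  { unfold Qval, k, m, b. field. lra. }
  assert (Hd1 : 0 < (D-1)^2) by nra.
  assert (Hp3 : p * (D-1)^2 <= 2 * D^2 + 1).
  { apply Rmult_le_compat_r with (r := (D-1)^2) in Hp2; [|lra].
    unfold Rdiv in Hp2. rewrite Rmult_assoc, Rinv_l in Hp2 by lra. lra. }
  assert (Hmk : 0 <= m - k^2).
  { unfold m, k.
    replace ((p - 1) * D / (D + 2) - ((p - 1) * (D - 1) / (D + 2)) ^ 2)
      with ((p-1)/(D+2)^2 * (D*(D+2) - (p-1)*(D-1)^2)) by (field; lra).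
    apply Rmult_le_pos. unfold Rdiv. apply Rmult_le_pos. lra. left. apply Rinv_0_lt_compat. nra. nra. }
  rewrite HQ. apply Rplus_le_le_0_compat; [apply pow2_ge_0 | apply Rmult_le_pos; [exact Hmk | apply pow2_ge_0]].
Qed.
Definition Lval D x F1 F2 := (1 - x^2) * F2 - D * x * F1.
Definition Kval D p x S F F1 F2 :=
  S * (Lval D x F1 F2 * Lval D x F1 F2)
  + (p - 1) * (S * ((F1^2 / F * (1 - x^2)) * Lval D x F1 F2))
  + D * (S * (F * Lval D x F1 F2)).
Definition Pval D p x S F F1 F2 := S * (1 - x^2)^2 * Qval D p F F1 F2.
Definition Hval D p x S F F1 :=
  S*(1-x^2)*(D*F*F1 + (p-1)*F1^3*(1-x^2)/F - D*x*F1^2)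
  - 2*(p-1)/(D+2)*(S*(1-x^2)^2*(F1^3/F)).

Lemma dH (Sf f f1 f2 : R -> R) D p x : D + 2 <> 0 -> f x <> 0 ->
  is_derive Sf x (-(D-2)*x*Sf x/(1-x^2)) -> is_derive f x (f1 x) -> is_derive f1 x (f2 x) ->
  1 - x^2 <> 0 ->
  is_derive (fun y => Hval D p y (Sf y) (f y) (f1 y)) x
    (Kval D p x (Sf x) (f x) (f1 x) (f2 x) - Pval D p x (Sf x) (f x) (f1 x) (f2 x)).
Proof.
  intros HD Hf HS H0 H1 Hn. unfold Hval. auto_derive.
  - repeat split; auto; eexists; eassumption.
  - replace (Derive (fun x0 => Sf x0) x) with (-(D-2)*x*Sf x/(1-x^2)) by (symmetry; apply is_derive_unique; auto).
    replace (Derive (fun x0 => f x0) x) with (f1 x) by (symmetry; apply is_derive_unique; auto).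
    replace (Derive (fun x0 => f1 x0) x) with (f2 x) by (symmetry; apply is_derive_unique; auto).
    unfold Kval, Pval, Qval, Lval. field. auto.
Qed.
Lemma cplus f g x : continuity_pt f x -> continuity_pt g x -> continuity_pt (fun y => f y + g y) x.
Proof. apply continuity_pt_plus. Qed.
Lemma cminus f g x : continuity_pt f x -> continuity_pt g x -> continuity_pt (fun y => f y - g y) x.
Proof. apply continuity_pt_minus. Qed.
Lemma cmul f g x : continuity_pt f x -> continuity_pt g x -> continuity_pt (fun y => f y * g y) x.
Proof. apply continuity_pt_mult. Qed.
Lemma cdiv f g x : continuity_pt f x -> continuity_pt g x -> g x <> 0 -> continuity_pt (fun y => f y / g y) x.
Proof. apply continuity_pt_div. Qed.
Lemma cinv g x : continuity_pt g x -> g x <> 0 -> continuity_pt (fun y => / g y) x.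
Proof. apply continuity_pt_inv. Qed.
Lemma cconst c x : continuity_pt (fun _ => c) x.
Proof. apply continuity_pt_const. intros a b; reflexivity. Qed.
Lemma cid x : continuity_pt (fun y => y) x.
Proof. apply continuity_pt_id. Qed.
Lemma cpow g n x : continuity_pt g x -> continuity_pt (fun y => g y ^ n) x.
Proof. intros H. induction n as [|n IH]; simpl. apply cconst. apply cmul; auto. Qed.
Lemma csqrt g x : continuity_pt g x -> 0 <= g x -> continuity_pt (fun y => sqrt (g y)) x.
Proof. intros H H0. apply (continuity_pt_comp g sqrt x H). apply continuity_pt_sqrt; auto. Qed.
Lemma cabs g x : continuity_pt g x -> continuity_pt (fun y => Rabs (g y)) x.
Proof. intros H. apply (continuity_pt_comp g Rabs x H). apply Rcontinuity_abs. Qed.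
Lemma copp g x : continuity_pt g x -> continuity_pt (fun y => - g y) x.
Proof. apply continuity_pt_opp. Qed.
Ltac cont := repeat (first [ match goal with H : forall x, continuity_pt _ x |- _ => apply H end
  | apply cconst | apply cminus | apply cplus | apply cdiv | apply cmul | apply cinv | apply cpow | apply csqrt
  | apply cabs | apply copp | apply cconst | apply cid | (cbv beta; lra) | (cbv beta; solve [auto]) ]).
Lemma cpt_ed f a : continuity_pt f a -> forall eps, 0 < eps -> exists alp, 0 < alp /\
  forall z, Rabs (z - a) < alp -> Rabs (f z - f a) < eps.
Proof.
  intros H eps He. destruct (H eps He) as [alp [Ha H']]. exists alp. split; auto.
  intros z Hz. destruct (Req_dec z a) as [->|Hza].
  - rewrite Rminus_diag, Rabs_R0; lra.
  - apply (H' z). split. split. exact I. auto. exact Hz.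
Qed.
Lemma endpt u v a : continuity_pt u a -> continuity_pt v a ->
  (forall del, 0 < del -> exists z, Rabs (z - a) < del /\ u z = v z) -> u a = v a.
Proof.
  intros Hu Hv H. destruct (Req_dec (u a) (v a)) as [E|E]; auto. exfalso.
  assert (He : 0 < Rabs (u a - v a) / 2) by (apply Rdiv_lt_0_compat; [apply Rabs_pos_lt; lra | lra]).
  destruct (cpt_ed u a Hu _ He) as [a1 [Ha1 H1]].
  destruct (cpt_ed v a Hv _ He) as [a2 [Ha2 H2]].
  destruct (H (Rmin a1 a2) (Rmin_pos _ _ Ha1 Ha2)) as [z [Hz Ez]].
  specialize (H1 z (Rlt_le_trans _ _ _ Hz (Rmin_l _ _))).
  specialize (H2 z (Rlt_le_trans _ _ _ Hz (Rmin_r _ _))).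
  rewrite Ez in H1.
  pose proof (Rabs_triang (u a - v z) (v z - v a)).
  replace (u a - v z + (v z - v a)) with (u a - v a) in H0 by ring.
  rewrite Rabs_minus_sym in H1. lra.
Qed.
Lemma ex_clamp G : (forall x, continuity_pt (fun y => G (clamp y)) x) -> ex_RInt G (-1) 1.
Proof.
  intros H. apply ex_RInt_ext with (fun y => G (clamp y)).
  - intros x Hx. rewrite Rmin_left in Hx by lra. rewrite Rmax_right in Hx by lra.
    rewrite clamp_id; [reflexivity | unfold in_I; lra].
  - apply (@ex_RInt_continuous R_CompleteNormedModule). intros z _. apply continuity_pt_filterlim. apply H.
Qed.

Lemma ex_cont G a b : (forall x, continuity_pt G x) -> ex_RInt G a b.
Proof. intros H. apply (@ex_RInt_continuous R_CompleteNormedModule). intros z _. apply continuity_pt_filterlim. apply H. Qed.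

Lemma RIp f g a b : ex_RInt f a b -> ex_RInt g a b ->
  RInt (fun x => f x + g x) a b = RInt f a b + RInt g a b.
Proof. intros. apply (RInt_plus f g a b); auto. Qed.
Lemma RIs f a b k : ex_RInt f a b -> RInt (fun x => k * f x) a b = k * RInt f a b.
Proof. intros. apply (RInt_scal f a b k); auto. Qed.
Lemma exp' f g a b : ex_RInt f a b -> ex_RInt g a b -> ex_RInt (fun x => f x + g x) a b.
Proof. intros. apply (ex_RInt_plus f g a b); auto. Qed.
Lemma exs f a b k : ex_RInt f a b -> ex_RInt (fun x => k * f x) a b.
Proof. intros. apply (ex_RInt_scal f a b k); auto. Qed.

Lemma cclamp x : continuity_pt (fun y => clamp y) x.
Proof.
  intros eps He. exists eps. split; auto. intros y [_ Hy]. simpl in *. unfold R_dist in *.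
  eapply Rle_lt_trans. apply clamp_lip. exact Hy.
Qed.

Theorem mainTheorem7 (d : nat) (p : R) (f f1 f2 : R -> R) :
  (2 <= d)%nat ->
  2 < p <= two_sharp d ->
  C2_on_I f f1 f2 ->
  (forall x, in_I x -> 0 < f x) ->
  inner d (Lop d f1 f2) (Lop d f1 f2)
  + (p - 1) * inner d (fun x => (Rabs (f1 x)) ^ 2 / f x * nu x) (Lop d f1 f2)
  + INR d * inner d f (Lop d f1 f2) >= 0.
Proof.
  intros Hd Hp [Hf0 [Hf1 Hf2c]] Hpos.
  assert (HD2 : 2 <= INR d) by (replace 2 with (INR 2) by (simpl; lra); apply le_INR; exact Hd).
  assert (cf : forall x, in_I x -> continuous_I f x) by (intros; eapply derI_cont; eauto).
  assert (cf1 : forall x, in_I x -> continuous_I f1 x) by (intros; eapply derI_cont; eauto).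
  pose proof (cont_clamp f cf) as Cf.
  pose proof (cont_clamp f1 cf1) as Cf1.
  pose proof (cont_clamp f2 Hf2c) as Cf2.
  pose proof cclamp as Cc.
  assert (Cpos : forall x, 0 < f (clamp x)) by (intros; apply Hpos, clamp_I).
  assert (Cn : forall x, f (clamp x) <> 0) by (intros x; pose proof (Cpos x); lra).
  assert (Cs : forall x, 0 <= 1 - clamp x ^ 2).
  { intros x. pose proof (clamp_I x) as [H1 H2]. nra. }
  unfold inner. cbv beta.
  set (G1 := fun x => / Zd d * weight d x * (Lop d f1 f2 x * Lop d f1 f2 x)).
  set (G2 := fun x => / Zd d * weight d x * (Rabs (f1 x) ^ 2 / f x * nu x * Lop d f1 f2 x)).
  set (G3 := fun x => / Zd d * weight d x * (f x * Lop d f1 f2 x)).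
  assert (E1 : ex_RInt G1 (-1) 1).
  { apply ex_clamp. intros x. unfold G1, Lop, weight. cont. }
  assert (E2 : ex_RInt G2 (-1) 1).
  { apply ex_clamp. intros x. unfold G2, Lop, weight, nu. cont. }
  assert (E3 : ex_RInt G3 (-1) 1).
  { apply ex_clamp. intros x. unfold G3, Lop, weight. cont. }
  pose (Pc := fun y => Pval (INR d) p (clamp y) (weight d (clamp y)) (f (clamp y)) (f1 (clamp y)) (f2 (clamp y))).
  pose (Hdc := fun y => Kval (INR d) p (clamp y) (weight d (clamp y)) (f (clamp y)) (f1 (clamp y)) (f2 (clamp y))
                 - Pval (INR d) p (clamp y) (weight d (clamp y)) (f (clamp y)) (f1 (clamp y)) (f2 (clamp y))).
  pose (Hc := fun y => Hval (INR d) p (clamp y) (weight d (clamp y)) (f (clamp y)) (f1 (clamp y))).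
  assert (CPc : forall x, continuity_pt Pc x).
  { intros x. unfold Pc, Pval, Qval, weight. cont. }
  assert (CHdc : forall x, continuity_pt Hdc x).
  { intros x. unfold Hdc, Kval, Lval, Pval, Qval, weight. cont. }
  assert (CHc : forall x, continuity_pt Hc x).
  { intros x. unfold Hc, Hval, weight. cont. }

  assert (EP : ex_RInt Pc (-1) 1) by (apply ex_cont; exact CPc).
  assert (exall : forall a b, ex_RInt Hdc a b) by (intros; apply ex_cont; exact CHdc).
  assert (Hsum : RInt G1 (-1) 1 + (p - 1) * RInt G2 (-1) 1 + INR d * RInt G3 (-1) 1
                 = / Zd d * RInt Pc (-1) 1 + / Zd d * RInt Hdc (-1) 1).
  { rewrite <- (RIs G2 (-1) 1 (p - 1) E2), <- (RIs G3 (-1) 1 (INR d) E3).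
    assert (E2' : ex_RInt (fun x => (p - 1) * G2 x) (-1) 1) by (apply exs; exact E2).
    assert (E12 : ex_RInt (fun x => G1 x + (p - 1) * G2 x) (-1) 1) by (apply exp'; [exact E1 | exact E2']).
    assert (E3' : ex_RInt (fun x => INR d * G3 x) (-1) 1) by (apply exs; exact E3).
    rewrite <- (RIp G1 (fun x => (p - 1) * G2 x) (-1) 1 E1 E2').
    rewrite <- (RIp (fun x => G1 x + (p - 1) * G2 x) (fun x => INR d * G3 x) (-1) 1 E12 E3').
    rewrite <- (RIs Pc (-1) 1 (/ Zd d) EP), <- (RIs Hdc (-1) 1 (/ Zd d) (exall _ _)).
    rewrite <- (RIp (fun x => / Zd d * Pc x) (fun x => / Zd d * Hdc x) (-1) 1 (exs _ _ _ _ EP) (exs _ _ _ _ (exall _ _))).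
    apply RInt_ext. intros x Hx. rewrite Rmin_left in Hx by lra. rewrite Rmax_right in Hx by lra.
    assert (Hin : in_I x) by (unfold in_I; lra).
    assert (Hfx : f x <> 0) by (pose proof (Hpos x Hin); lra).
    unfold G1, G2, G3, Pc, Hdc. rewrite clamp_id by exact Hin.
    unfold Lop, nu, Kval, Pval, Lval. rewrite pow2_abs. match goal with |- ?a = ?b => change (@eq R a b) end. ring. }

  assert (DH : forall x, -1 < x < 1 -> is_derive Hc x (Hdc x)).
  { intros x Hx.
    assert (Hin : in_I x) by (unfold in_I; lra).
    apply (is_derive_ext_loc (fun y => Hval (INR d) p y (weight d y) (f y) (f1 y))).
    - assert (Hr : 0 < Rmin (x + 1) (1 - x)) by (apply Rmin_pos; lra).
      exists (mkposreal _ Hr). intros y Hy. apply ballR in Hy. simpl in Hy.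
      pose proof (Rmin_l (x + 1) (1 - x)). pose proof (Rmin_r (x + 1) (1 - x)).
      apply Rabs_def2 in Hy. unfold minus, plus, opp in Hy; simpl in Hy. unfold Hc. rewrite clamp_id; [reflexivity | unfold in_I; lra].
    - unfold Hdc. rewrite clamp_id by exact Hin.
      apply dH.
      + lra.
      + pose proof (Hpos x Hin); lra.
      + unfold weight.
        replace (- (INR d - 2) * x * sqrt (1 - x ^ 2) ^ (d - 2) / (1 - x ^ 2))
          with (- INR (d - 2) * x * sqrt (1 - x ^ 2) ^ (d - 2) / (1 - x ^ 2))
          by (rewrite minus_INR by exact Hd; replace (INR 2) with 2 by (simpl; lra); reflexivity).
        apply dS; exact Hx.
      + apply derI_int; auto.
      + apply derI_int; auto.
      + nra. }
  assert (IR : forall a b, -1 < a < 1 -> -1 < b < 1 -> is_RInt Hdc a b (Hc b - Hc a)).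
  { intros a b Ha Hb. apply (is_RInt_derive Hc Hdc a b).
    - intros x Hx. apply DH. unfold Rmin, Rmax in Hx. destruct Rle_dec in Hx; lra.
    - intros x _. apply continuity_pt_filterlim. apply CHdc. }
  assert (CPhi : forall z, continuity_pt (fun z => RInt Hdc 0 z) z).
  { intros z. apply continuity_pt_filterlim. apply (continuous_RInt_1 Hdc 0 z).
    apply filter_forall. intros y. apply (@RInt_correct R_CompleteNormedModule). apply exall. }
  assert (Phi_in : forall z, -1 < z < 1 -> RInt Hdc 0 z = Hc z - Hc 0).
  { intros z Hz. apply is_RInt_unique. apply IR; lra. }
  assert (CH0 : forall a, continuity_pt (fun z => Hc z - Hc 0) a).
  { intros a. apply cminus. apply CHc. apply cconst. }
  assert (Hc1 : Hc 1 = 0).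
  { unfold Hc, Hval. rewrite clamp_id by (unfold in_I; lra). ring. }
  assert (Hcm1 : Hc (-1) = 0).
  { unfold Hc, Hval. rewrite clamp_id by (unfold in_I; lra). ring. }
  assert (P1 : RInt Hdc 0 1 = Hc 1 - Hc 0).
  { apply (endpt (fun z => RInt Hdc 0 z) (fun z => Hc z - Hc 0) 1 (CPhi 1) (CH0 1)).
    intros del Hdel. exists (1 - Rmin del 1 / 2).
    pose proof (Rmin_l del 1). pose proof (Rmin_r del 1). pose proof (Rmin_pos del 1 Hdel Rlt_0_1).
    split.
    - rewrite Rabs_left by lra. lra.
    - apply Phi_in. lra. }
  assert (Pm1 : RInt Hdc 0 (-1) = Hc (-1) - Hc 0).
  { apply (endpt (fun z => RInt Hdc 0 z) (fun z => Hc z - Hc 0) (-1) (CPhi (-1)) (CH0 (-1))).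
    intros del Hdel. exists (-1 + Rmin del 1 / 2).
    pose proof (Rmin_l del 1). pose proof (Rmin_r del 1). pose proof (Rmin_pos del 1 Hdel Rlt_0_1).
    split.
    - rewrite Rabs_pos_eq by lra. lra.
    - apply Phi_in. lra. }
  assert (H0 : RInt Hdc (-1) 1 = 0).
  { rewrite <- (RInt_Chasles Hdc (-1) 0 1) by apply exall.
    rewrite <- (opp_RInt_swap Hdc 0 (-1)) by apply exall.
    change (- RInt Hdc 0 (-1) + RInt Hdc 0 1 = 0).
    rewrite P1, Pm1, Hc1, Hcm1. ring. }
  assert (HP : 0 <= RInt Pc (-1) 1).
  { apply RInt_ge_0. lra. exact EP.
    intros x Hx. assert (Hin : in_I x) by (unfold in_I; lra).
    unfold Pc, Pval. rewrite clamp_id by exact Hin.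
    apply Rmult_le_pos. apply Rmult_le_pos.
    - unfold weight. apply pow_le. apply sqrt_pos.
    - apply pow_le. nra.
    - apply Q_ge0. apply Hpos; exact Hin. exact HD2. lra. destruct Hp as [_ Hp]. exact Hp. }
  rewrite Hsum, H0. pose proof (invZd_ge0 d).
  apply Rle_ge. rewrite Rmult_0_r, Rplus_0_r. apply Rmult_le_pos; assumption.
Qed.
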